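(* Let $P$ be a finite point set in $\mathbb{R}^d$, let $s>0$, and let $A,B\subseteq P$ be such that $\{A,B\}$ is an $s$-well-separated pair with $|B|\geq 2$. (1) For any point $a\in A$ and any two distinct points $b,c\in B$, $|\Delta_{abc}|\leq (1+2/s)\,|\Delta^*(a,b)|$. (2) Assume additionally $|A|\geq 2$. For any two points $a,a'\in A$ and any two points $b,b'\in B$, $|\Delta^*(a,b)|\leq (1+8/s)\,|\Delta^*(a',b')|$.
   Context: Distances are Euclidean. Two point sets $A$ and $B$ form an $s$-well-separated pair if $A$ and $B$ can each be covered by a ball of the same radius $\rho$ such that the distance between the two balls is at least $s\cdot\rho$. $|\Delta_{abc}|=|ab|+|bc|+|ca|$ is the perimeter of the triangle on $a,b,c$. For distinct $p,q\in P$, $\Delta^*(p,q)$ is the minimum-perimeter triangle $\Delta_{pqx}$ over $x\in P\setminus\{p,q\}$. *)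

(* Defs.v *)
From HB Require Import structures.
From mathcomp Require Import all_boot all_order all_algebra.
From mathcomp Require Import finmap.
Set Implicit Arguments. Unset Strict Implicit. Unset Printing Implicit Defensive.
Import Order.TTheory GRing.Theory Num.Theory.
Local Open Scope ring_scope.
Local Open Scope fset_scope.

Definition edist (R : rcfType) (d : nat) (p q : 'rV[R]_d) : R :=
  Num.sqrt (\sum_(i < d) (p 0 i - q 0 i) ^+ 2).

Definition perim (R : rcfType) (d : nat) (a b c : 'rV[R]_d) : R :=
  edist a b + edist b c + edist c a.

Definition covered_by_ball (R : rcfType) (d : nat) (X : {fset 'rV[R]_d})
  (c : 'rV[R]_d) (rho : R) : Prop :=
  forall x, x \in X -> edist c x <= rho.

Definition well_separated (R : rcfType) (d : nat) (s : R)
  (A B : {fset 'rV[R]_d}) : Prop :=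
  exists (rho : R) (c1 c2 : 'rV[R]_d),
    0 <= rho /\ covered_by_ball A c1 rho /\ covered_by_ball B c2 rho /\
    (forall x y, edist c1 x <= rho -> edist c2 y <= rho -> s * rho <= edist x y).

(* minimum of a finite list of reals (0 on the empty list; never used there) *)
Definition minlist (R : rcfType) (l : seq R) : R :=
  match l with [::] => 0 | h :: t => foldr Num.min h t end.

Definition tri_star (R : rcfType) (d : nat) (P : {fset 'rV[R]_d}) (p q : 'rV[R]_d) : R :=
  minlist [seq perim p q x | x <- enum_fset (P `\` [fset p; q])].

(* Main.v *)
Require Import Defs.
From HB Require Import structures.
From mathcomp Require Import all_boot all_order all_algebra.
From mathcomp Require Import finmap.
From mathcomp Require Import ring lra.
Import Order.TTheory GRing.Theory Num.Theory.
Local Open Scope ring_scope.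
Local Open Scope fset_scope.

Section Aux.
Local Open Scope ring_scope.
Context {R : rcfType}.
Context {d : nat}.
Implicit Types p q r : 'rV[R]_d.

Lemma edist_ge0 p q : 0 <= edist p q.
Proof. exact: sqrtr_ge0. Qed.

Lemma edist_sym p q : edist p q = edist q p.
Proof.
rewrite /edist; congr Num.sqrt; apply: eq_bigr => i _.
by rewrite -sqrrN opprB.
Qed.

Lemma edist_xx p : edist p p = 0.
Proof.
rewrite /edist big1 ?sqrtr0 // => i _; by rewrite subrr expr0n.
Qed.

Lemma edist_eq0 p q : edist p q = 0 -> p = q.
Proof.
move=> /eqP; rewrite sqrtr_eq0 => H.
have H0 : \sum_(i < d) (p 0 i - q 0 i) ^+ 2 = 0.
  apply/eqP; rewrite eq_le H /=; apply: sumr_ge0 => i _; exact: sqr_ge0.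
apply/rowP => i.
have := psumr_eq0P (fun i _ => sqr_ge0 (p 0 i - q 0 i)) H0 (i:=i) isT.
by move/eqP; rewrite sqrf_eq0 subr_eq0 => /eqP.
Qed.

Lemma cauchy_schwarz (x y : 'I_d -> R) :
  \sum_i x i * y i <= Num.sqrt (\sum_i x i ^+ 2) * Num.sqrt (\sum_i y i ^+ 2).
Proof.
set X := Num.sqrt _; set Y := Num.sqrt _.
have sx : 0 <= \sum_i x i ^+ 2 by apply: sumr_ge0 => i _; exact: sqr_ge0.
have sy : 0 <= \sum_i y i ^+ 2 by apply: sumr_ge0 => i _; exact: sqr_ge0.
have X2 : X ^+ 2 = \sum_i x i ^+ 2 by rewrite sqr_sqrtr.
have Y2 : Y ^+ 2 = \sum_i y i ^+ 2 by rewrite sqr_sqrtr.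
have X0 : 0 <= X by exact: sqrtr_ge0.
have Y0 : 0 <= Y by exact: sqrtr_ge0.
have key : 0 <= \sum_i (x i * Y - y i * X) ^+ 2
  by apply: sumr_ge0 => i _; exact: sqr_ge0.
have E : \sum_i (x i * Y - y i * X) ^+ 2 =
   Y ^+ 2 * (\sum_i x i ^+ 2) + X ^+ 2 * (\sum_i y i ^+ 2)
   - 2 * (X * Y) * (\sum_i x i * y i).
  rewrite mulr_sumr mulr_sumr mulr_sumr -big_split /= -sumrB.
  by apply: eq_bigr => i _; ring.
rewrite E -X2 -Y2 in key.
have [XY0|XYp] := eqVneq (X * Y) 0.
  move/eqP: XY0; rewrite mulf_eq0 => /orP[] /eqP Z.
  - have : \sum_i x i ^+ 2 = 0 by rewrite -X2 Z expr0n.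
    move=> /(psumr_eq0P (fun i _ => sqr_ge0 (x i))) h.
    rewrite big1 ?Z ?mul0r // => i _.
    by move/eqP: (h i isT); rewrite sqrf_eq0 => /eqP ->; rewrite mul0r.
  - have : \sum_i y i ^+ 2 = 0 by rewrite -Y2 Z expr0n.
    move=> /(psumr_eq0P (fun i _ => sqr_ge0 (y i))) h.
    rewrite big1 ?Z ?mulr0 // => i _.
    by move/eqP: (h i isT); rewrite sqrf_eq0 => /eqP ->; rewrite mulr0.
have XYp' : 0 < X * Y by rewrite lt_def XYp mulr_ge0.
set S := \sum_i x i * y i in key *.
have : (X * Y) * S <= (X * Y) * (X * Y) by nra.
by rewrite ler_pM2l.
Qed.

Lemma edist_tri p q r : edist p r <= edist p q + edist q r.
Proof.
rewrite /edist.
set x := fun i : 'I_d => p 0 i - q 0 i.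
set y := fun i : 'I_d => q 0 i - r 0 i.
have cs := cauchy_schwarz x y.
have sx : 0 <= \sum_i x i ^+ 2 by apply: sumr_ge0 => i _; exact: sqr_ge0.
have sy : 0 <= \sum_i y i ^+ 2 by apply: sumr_ge0 => i _; exact: sqr_ge0.
set X := Num.sqrt (\sum_i x i ^+ 2) in cs *.
set Y := Num.sqrt (\sum_i y i ^+ 2) in cs *.
have X0 : 0 <= X by exact: sqrtr_ge0.
have Y0 : 0 <= Y by exact: sqrtr_ge0.
have E : \sum_(i < d) (p 0 i - r 0 i) ^+ 2 =
   \sum_i x i ^+ 2 + \sum_i y i ^+ 2 + 2 * \sum_i x i * y i.
  rewrite mulr_sumr -!big_split /=; apply: eq_bigr => i _.
  rewrite /x /y; ring.
rewrite E -(ger0_norm (addr_ge0 X0 Y0)) -sqrtr_sqr ler_sqrt; last exact: sqr_ge0.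
have -> : (X + Y) ^+ 2 = X ^+ 2 + Y ^+ 2 + 2 * (X * Y) by ring.
rewrite !sqr_sqrtr //; lra.
Qed.

Lemma minlist_le (l : seq R) y : y \in l -> minlist l <= y.
Proof.
case: l => // h t; rewrite /=.
elim: t => [|x t IH] /=; first by rewrite inE => /eqP ->.
rewrite !inE => /orP[/eqP Hy|/orP[H|H]]; rewrite ge_min.
- by rewrite IH ?orbT // Hy mem_head.
- by move/eqP: H => ->; rewrite lexx.
- by rewrite IH ?orbT // inE H orbT.
Qed.

Lemma minlist_in (l : seq R) : l != [::] -> minlist l \in l.
Proof.
case: l => // h t _ /=.
elim: t => [|x t IH] /=; first by rewrite inE.
rewrite /Order.min; case: ifP => _.
- by rewrite !inE eqxx orbT.
- by move: IH; rewrite !inE => /orP[->|->]; rewrite ?orbT.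
Qed.

Lemma perim_ge p q x : 2 * edist p q <= perim p q x.
Proof.
rewrite /perim; have := edist_tri p x q; rewrite (edist_sym x p) (edist_sym q x); lra.
Qed.

Lemma tri_star_le (P : {fset 'rV[R]_d}) p q c :
  c \in P -> c != p -> c != q -> tri_star P p q <= perim p q c.
Proof.
move=> cP cp cq; apply: minlist_le; apply: map_f.
by rewrite in_fsetD in_fset2 negb_or cp cq cP.
Qed.

Lemma tri_star_ge (P : {fset 'rV[R]_d}) p q c :
  c \in P -> c != p -> c != q -> 2 * edist p q <= tri_star P p q.
Proof.
move=> cP cp cq; rewrite /tri_star.
set l := [seq _ | _ <- _].
have : l != [::].
  have : perim p q c \in l.
    apply: map_f. by rewrite in_fsetD in_fset2 negb_or cp cq cP.
  by case: (l).
move/minlist_in => /mapP [x _ ->]; exact: perim_ge.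
Qed.
End Aux.

Theorem lemma6 (R : rcfType) (d : nat) (P A B : {fset 'rV[R]_d}) (s : R)
  (hs : 0 < s) (hAP : A `<=` P) (hBP : B `<=` P)
  (hws : well_separated s A B) (hB : (1 < #|` B|)%N) :
  (forall a b c, a \in A -> b \in B -> c \in B -> b != c ->
     perim a b c <= (1 + 2 / s) * tri_star P a b) /\
  ((1 < #|` A|)%N ->
   forall a a' b b', a \in A -> a' \in A -> b \in B -> b' \in B ->
     tri_star P a b <= (1 + 8 / s) * tri_star P a' b').
Proof.
move: hws => [rho [c1 [c2 [rho0 [cA [cB sep]]]]]].
have sepAB : forall x y, x \in A -> y \in B -> s * rho <= edist x y.
  by move=> x y /cA hx /cB hy; exact: sep.
have dB : forall x y, x \in B -> y \in B -> edist x y <= 2 * rho.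
  move=> x y /cB hx /cB hy; have := edist_tri x c2 y.
  rewrite (edist_sym x c2); lra.
have dA : forall x y, x \in A -> y \in A -> edist x y <= 2 * rho.
  move=> x y /cA hx /cA hy; have := edist_tri x c1 y.
  rewrite (edist_sym x c1); lra.
have other : forall b, exists c, c \in B /\ c != b.
  move=> b; have : (B `\ b) != fset0.
    apply/eqP => E; move: hB; rewrite (cardfsD1 b) E cardfs0 addn0.
    by case: (b \in B).
  by move/fset0Pn => [c /fsetD1P [H1 H2]]; exists c.
have rhop : (0 < rho)%R.
  have [b0 hb0] : exists b0, b0 \in B.
    apply/fset0Pn; apply/eqP => E; move: hB; by rewrite E cardfs0.
  have [c0 [hc0 nc0]] := other b0.
  rewrite lt_def rho0 andbT; apply/eqP => r0.
  have := dB _ _ hc0 hb0; rewrite r0 mulr0 => h.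
  have : edist c0 b0 = 0 by apply/eqP; rewrite eq_le h edist_ge0.
  by move/edist_eq0 => E; move: nc0; rewrite E eqxx.
have sD : forall x y, x \in A -> y \in B -> (rho <= edist x y / s)%R.
  by move=> x y hx hy; rewrite ler_pdivlMr // mulrC; exact: sepAB.
have neq : forall x y, x \in A -> y \in B -> y != x.
  move=> x y hx hy; apply/eqP => E; have := sepAB _ _ hx hy.
  rewrite E edist_xx => h.
  have : (0 < s * rho)%R by exact: mulr_gt0.
  by rewrite ltNge h.
have inP : forall x, x \in B -> x \in P by move=> x; apply: (fsubsetP hBP).
have sne : s != 0 by rewrite gt_eqF.
split.
  move=> a b c ha hb hc nbc.
  rewrite eq_sym in nbc.
  have hT := tri_star_ge P a b c (inP _ hc) (neq _ _ ha hc) nbc.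
  have h1 := dB _ _ hb hc.
  have h2 := edist_tri c b a.
  have h3 := sD _ _ ha hb.
  set T := tri_star P a b in hT *.
  have h4 : (0 <= 2 / s * (T - 2 * edist a b))%R.
    apply: mulr_ge0; first by rewrite divr_ge0 // ltW.
    lra.
  rewrite /perim (edist_sym b a) (edist_sym c b) in h2 *.
  have -> : ((1 + 2 / s) * T = T + 2 / s * (T - 2 * edist a b) + 4 * (edist a b / s))%R
    by field.
  lra.
move=> _ a a' b b' ha ha' hb hb'.
have [c [hc ncb]] := other b.
have [c' [hc' ncb']] := other b'.
have hT1 := tri_star_le P a b c (inP _ hc) (neq _ _ ha hc) ncb.
have hT2 := tri_star_ge P a' b' c' (inP _ hc') (neq _ _ ha' hc') ncb'.
have h1 := dB _ _ hb hc.
have h2 := edist_tri c b a.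
have h3 := sD _ _ ha' hb'.
have h5 := edist_tri a a' b.
have h6 := edist_tri a' b' b.
have h7 := dA _ _ ha ha'.
have h8 := dB _ _ hb' hb.
set T2 := tri_star P a' b' in hT2 *.
set T1 := tri_star P a b in hT1 *.
have h4 : (0 <= 8 / s * (T2 - 2 * edist a' b'))%R.
  apply: mulr_ge0; first by rewrite divr_ge0 // ltW.
  lra.
rewrite /perim (edist_sym b a) (edist_sym c b) in h2 hT1.
have -> : ((1 + 8 / s) * T2 = T2 + 8 / s * (T2 - 2 * edist a' b') + 16 * (edist a' b' / s))%R
  by field.
lra.
Qed.
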